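(* Let $A,B>0$, $x\ge1$, let $\lambda$ be a nonnegative multiplicative function in $\mathcal M(x;A,B)$, and let $\vartheta$ be a complex-valued additive function. Put $$\Theta(x):=\sum_{p^\nu\le x}\frac{\lambda(p^\nu)\vartheta(p^\nu)}{p^\nu},\qquad\mathfrak S(x):=\sum_{p^\nu\le x}\frac{\lambda(p^\nu)|\vartheta(p^\nu)|^2}{p^\nu},$$ the sums running over prime powers $p^\nu$ with $\nu\ge1$. Then $$\sum_{n\le x}\frac{\lambda(n)}{n}|\vartheta(n)-\Theta(x)|^2\ll\mathfrak S(x)\sum_{n\le x}\frac{\lambda(n)}{n},$$ with implied constant depending only on $A,B$.
   Context: For $x\ge1$, $A,B>0$, $\mathcal M(x;A,B)$ is the class of complex multiplicative $f$ with $\max_{p\le x}|f(p)|\le A$ and $\sum_{p^\nu\le x,\ \nu\ge2}|f(p^\nu)|\log(p^\nu)/p^\nu\le B$ ($p$ prime). *)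

(* Defs.v *)
From Stdlib Require Import Reals ZArith Znumtheory List Arith.
Import ListNotations.
Open Scope R_scope.

(* Complex numbers represented as pairs (real part, imaginary part). *)
Definition Cpx : Type := (R * R)%type.
Definition Cadd (z w : Cpx) : Cpx := (fst z + fst w, snd z + snd w).
Definition Csub (z w : Cpx) : Cpx := (fst z - fst w, snd z - snd w).
Definition Cnorm2 (z : Cpx) : R := fst z * fst z + snd z * snd z.

Definition is_prime (p : nat) : Prop := prime (Z.of_nat p).

(* bound M with every n <= x satisfying n <= M *)
Definition bnd (x : R) : nat := Z.to_nat (up x).

Definition rsum (l : list nat) (f : nat -> R) : R :=
  fold_right Rplus 0 (map f l).

Definition sum_upto (x : R) (f : nat -> R) : R :=
  rsum (seq 1 (bnd x))
    (fun n => if Rle_dec (INR n) x then f n else 0).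

(* sum over prime powers p^nu <= x with nu >= nu0 of g (p^nu)
   (each prime power is counted exactly once, via its unique (p, nu)) *)
Definition pp_sum_from (nu0 : nat) (x : R) (g : nat -> R) : R :=
  rsum (seq 1 (bnd x)) (fun p =>
    rsum (seq 1 (bnd x)) (fun nu =>
      if prime_dec (Z.of_nat p) then
        if le_dec nu0 nu then
          if Rle_dec (INR (p ^ nu)%nat) x then g (p ^ nu)%nat else 0
        else 0
      else 0)).

Definition multiplicative_R (f : nat -> R) : Prop :=
  f 1%nat = 1 /\
  forall m n, (1 <= m)%nat -> (1 <= n)%nat -> Nat.gcd m n = 1%nat ->
    f (m * n)%nat = f m * f n.

Definition additive_C (f : nat -> Cpx) : Prop :=
  forall m n, (1 <= m)%nat -> (1 <= n)%nat -> Nat.gcd m n = 1%nat ->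
    f (m * n)%nat = Cadd (f m) (f n).

Definition in_M (x A B : R) (f : nat -> R) : Prop :=
  (forall p : nat, is_prime p -> INR p <= x -> Rabs (f p) <= A) /\
  pp_sum_from 2 x (fun q => Rabs (f q) * ln (INR q) / INR q) <= B.

Definition Theta (lam : nat -> R) (th : nat -> Cpx) (x : R) : Cpx :=
  (pp_sum_from 1 x (fun q => lam q * fst (th q) / INR q),
   pp_sum_from 1 x (fun q => lam q * snd (th q) / INR q)).

Definition frakS (lam : nat -> R) (th : nat -> Cpx) (x : R) : R :=
  pp_sum_from 1 x (fun q => lam q * Cnorm2 (th q) / INR q).

(* Main.v *)
Require Import Defs.
From Stdlib Require Import Reals ZArith Znumtheory List Arith Lia Lra.
Import ListNotations.
Open Scope R_scope.

Lemma rsum_nil f : rsum [] f = 0. Proof. reflexivity. Qed.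
Lemma rsum_cons a l f : rsum (a :: l) f = f a + rsum l f. Proof. reflexivity. Qed.
Lemma rsum_app l1 l2 f : rsum (l1 ++ l2) f = rsum l1 f + rsum l2 f.
Proof. induction l1; simpl; [unfold rsum; simpl; ring|]. unfold rsum in *; simpl. rewrite IHl1; ring. Qed.
Lemma rsum_ext_in l f g : (forall a, In a l -> f a = g a) -> rsum l f = rsum l g.
Proof. induction l; intros H; [reflexivity|]. rewrite !rsum_cons. rewrite H by (left; auto). rewrite IHl; auto. intros; apply H; right; auto. Qed.
Lemma rsum_ext l f g : (forall a, f a = g a) -> rsum l f = rsum l g.
Proof. intros; apply rsum_ext_in; auto. Qed.
Lemma rsum_le_in l f g : (forall a, In a l -> f a <= g a) -> rsum l f <= rsum l g.
Proof. induction l; intros H; [unfold rsum; simpl; lra|]. rewrite !rsum_cons.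
 assert (f a <= g a) by (apply H; left; auto). assert (rsum l f <= rsum l g) by (apply IHl; intros; apply H; right; auto). lra. Qed.
Lemma rsum_le l f g : (forall a, f a <= g a) -> rsum l f <= rsum l g.
Proof. intros; apply rsum_le_in; auto. Qed.
Lemma rsum_plus l f g : rsum l (fun a => f a + g a) = rsum l f + rsum l g.
Proof. induction l; [unfold rsum; simpl; ring|]. rewrite !rsum_cons, IHl; ring. Qed.
Lemma rsum_minus l f g : rsum l (fun a => f a - g a) = rsum l f - rsum l g.
Proof. induction l; [unfold rsum; simpl; ring|]. rewrite !rsum_cons, IHl; ring. Qed.
Lemma rsum_scal l c f : rsum l (fun a => c * f a) = c * rsum l f.
Proof. induction l; [unfold rsum; simpl; ring|]. rewrite !rsum_cons, IHl; ring. Qed.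
Lemma rsum_zero l : rsum l (fun _ => 0) = 0.
Proof. induction l; [reflexivity|]. rewrite rsum_cons, IHl; ring. Qed.
Lemma rsum_nonneg l f : (forall a, In a l -> 0 <= f a) -> 0 <= rsum l f.
Proof. intros H. rewrite <- (rsum_zero l). apply rsum_le_in; auto. Qed.
Lemma rsum_flat_map l (F : nat -> list nat) f :
  rsum (flat_map F l) f = rsum l (fun a => rsum (F a) f).
Proof. induction l; [reflexivity|]. simpl. rewrite rsum_app, rsum_cons, IHl. reflexivity. Qed.
Lemma rsum_map' l (g : nat -> nat) f : rsum (map g l) f = rsum l (fun a => f (g a)).
Proof. unfold rsum. rewrite map_map. reflexivity. Qed.
Lemma rsum_filter l (P : nat -> bool) f :
  rsum (filter P l) f = rsum l (fun a => if P a then f a else 0).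
Proof. induction l; [reflexivity|]. cbn [filter]. rewrite (rsum_cons a l). destruct (P a); rewrite ?rsum_cons, IHl; ring. Qed.

Lemma rsum_sub_le (l1 l2 : list nat) f :
  NoDup l1 -> (forall a, In a l1 -> 0 <= f a) -> (forall a, In a l2 -> 0 <= f a) -> (forall a, In a l1 -> 0 < f a -> In a l2) ->
  rsum l1 f <= rsum l2 f.
Proof.
  revert l2. induction l1 as [|a l1 IH]; intros l2 Hnd Hf1 Hf2 Hin.
  - rewrite rsum_nil. apply rsum_nonneg; auto.
  - inversion Hnd; subst. rewrite rsum_cons.
    destruct (Rle_lt_dec (f a) 0) as [Hle|Hlt].
    + assert (f a = 0) by (specialize (Hf1 a (or_introl eq_refl)); lra).
      assert (rsum l1 f <= rsum l2 f) by (apply IH; auto; intros; [apply Hf1; right; auto| apply Hin; auto; right; auto]). lra.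
    + assert (In a l2) by (apply Hin; auto; left; auto).
      destruct (in_split a l2) as [u [v Huv]]; auto. subst l2.
      rewrite rsum_app, rsum_cons.
      assert (rsum l1 f <= rsum (u ++ v) f).
      { apply IH; auto.
        - intros; apply Hf1; right; auto.
        - intros b Hb. apply Hf2. apply in_app_or in Hb. apply in_or_app. destruct Hb; auto. right; right; auto.
        - intros b Hb Hfb. assert (In b (u ++ a :: v)) by (apply Hin; auto; right; auto).
          apply in_app_or in H0. apply in_or_app. destruct H0 as [H0|H0]; auto. destruct H0; auto.
          subst; contradiction. }
      rewrite rsum_app in H0. lra.
Qed.

Lemma cs_step X U V a b r : 0 <= r -> 0 <= U -> 0 <= V -> X * X <= U * V ->
  (X + r * a * b) * (X + r * a * b) <= (U + r * a * a) * (V + r * b * b).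
Proof.
  intros Hr HU HV H.
  assert (Hk : 2 * X * a * b <= a * a * V + b * b * U).
  { assert (H1 : (2*X*a*b)*(2*X*a*b) <= (a*a*V + b*b*U)*(a*a*V+b*b*U)).
    { assert (0 <= (a*a*V - b*b*U)*(a*a*V - b*b*U)) by apply Rle_0_sqr.
      assert ((2*X*a*b)*(2*X*a*b) = 4*(a*a)*(b*b)*(X*X)) by ring.
      assert (4*(a*a)*(b*b)*(X*X) <= 4*(a*a)*(b*b)*(U*V)).
      { apply Rmult_le_compat_l; [|auto]. assert (0 <= a*a) by apply Rle_0_sqr. assert (0<= b*b) by apply Rle_0_sqr. apply Rmult_le_pos; [apply Rmult_le_pos|]; lra. }
      assert ((a*a*V + b*b*U)*(a*a*V+b*b*U) = (a*a*V - b*b*U)*(a*a*V - b*b*U) + 4*(a*a)*(b*b)*(U*V)) by ring.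
      lra. }
    assert (0 <= a*a*V + b*b*U) by (assert (0 <= a*a) by apply Rle_0_sqr; assert (0<= b*b) by apply Rle_0_sqr; assert (0 <= a*a*V) by (apply Rmult_le_pos; lra); assert (0 <= b*b*U) by (apply Rmult_le_pos; lra); lra).
    destruct (Rle_lt_dec (2*X*a*b) 0); [lra|].
    nra. }
  assert (r * (2 * X * a * b) <= r * (a * a * V + b * b * U)) by (apply Rmult_le_compat_l; auto).
  assert (0 <= r*a*a*(r*b*b)) by (assert (0 <= a*a) by nra; assert (0<= b*b) by nra;
     assert (0 <= r*(a*a)) by nra; assert (0 <= r*(b*b)) by nra; nra).
  nra.
Qed.

Lemma cs_w l r a b : (forall i, 0 <= r i) ->
  rsum l (fun i => r i * a i * b i) * rsum l (fun i => r i * a i * b i)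
  <= rsum l (fun i => r i * a i * a i) * rsum l (fun i => r i * b i * b i).
Proof.
  intros Hr. induction l as [|i l IH].
  - rewrite !rsum_nil; lra.
  - rewrite !rsum_cons.
    assert (0 <= rsum l (fun i => r i * a i * a i)) by (apply rsum_nonneg; intros; specialize (Hr a0); nra).
    assert (0 <= rsum l (fun i => r i * b i * b i)) by (apply rsum_nonneg; intros; specialize (Hr a0); nra).
    pose proof (cs_step _ _ _ (a i) (b i) (r i) (Hr i) H H0 IH). nra.
Qed.
Lemma isP_ge2 p : is_prime p -> (2 <= p)%nat.
Proof. intros H. apply prime_ge_2 in H. lia. Qed.

Lemma divZ a b : Nat.divide a b -> (Z.of_nat a | Z.of_nat b)%Z.
Proof. intros [k Hk]. exists (Z.of_nat k). subst. rewrite Nat2Z.inj_mul. reflexivity. Qed.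

Lemma divN a b : (Z.of_nat a | Z.of_nat b)%Z -> Nat.divide a b.
Proof.
  intros [k Hk]. destruct a as [|a].
  - simpl in Hk. assert (b = 0%nat) by lia. subst. exists 0%nat. lia.
  - assert (0 <= k)%Z by nia. exists (Z.to_nat k). apply Nat2Z.inj. rewrite Nat2Z.inj_mul, Z2Nat.id; lia.
Qed.

Lemma pmult p a b : is_prime p -> Nat.divide p (a * b) -> Nat.divide p a \/ Nat.divide p b.
Proof. intros Hp H. apply divZ in H. rewrite Nat2Z.inj_mul in H.
  destruct (prime_mult _ Hp _ _ H); [left|right]; apply divN; auto. Qed.

Lemma pdiv_prime q p : is_prime q -> is_prime p -> Nat.divide q p -> q = p.
Proof. intros Hq Hp H. apply divZ in H. pose proof (isP_ge2 _ Hq).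
  destruct (prime_divisors _ Hp _ H) as [E|[E|[E|E]]]; lia. Qed.

Lemma pdiv_pow q p v : is_prime q -> is_prime p -> Nat.divide q (p ^ v) -> q = p.
Proof. intros Hq Hp. induction v; intros H.
  - simpl in H. apply Nat.divide_1_r in H. pose proof (isP_ge2 _ Hq). lia.
  - simpl in H. destruct (pmult _ _ _ Hq H); auto. apply pdiv_prime; auto. Qed.

Lemma prime_factor_exists n : (2 <= n)%nat -> exists q, is_prime q /\ Nat.divide q n.
Proof.
  induction n as [n IH] using lt_wf_ind. intros Hn.
  destruct (prime_dec (Z.of_nat n)) as [Hp|Hp].
  - exists n. split; auto. apply Nat.divide_refl.
  - destruct (not_prime_divide (Z.of_nat n)) as [m [Hm Hd]]; [lia|auto|].
    assert (0 <= m)%Z by lia. rewrite <- (Z2Nat.id m) in Hd by lia. apply divN in Hd.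
    destruct (IH (Z.to_nat m)) as [q [Hq Hqd]]; try lia.
    exists q. split; auto. eapply Nat.divide_trans; eauto.
Qed.

Lemma coprime_pow p v N : is_prime p -> ~ Nat.divide p N -> (1 <= N)%nat -> Nat.gcd (p ^ v) N = 1%nat.
Proof.
  intros Hp HN HN1. set (g := Nat.gcd (p^v) N).
  assert (Hg1 : g <> 0%nat). { intros E. apply Nat.gcd_eq_0 in E. lia. }
  destruct (Nat.eq_dec g 1) as [|Hne]; auto. exfalso.
  destruct (prime_factor_exists g) as [q [Hq Hqd]]; [lia|].
  assert (q = p). { apply (pdiv_pow q p v); auto. eapply Nat.divide_trans; [eauto|apply Nat.gcd_divide_l]. }
  subst q. apply HN. eapply Nat.divide_trans; [eauto|apply Nat.gcd_divide_r].
Qed.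

Lemma val_decomp p n : is_prime p -> (1 <= n)%nat -> exists v m, n = (p ^ v * m)%nat /\ ~ Nat.divide p m.
Proof.
  intros Hp. pose proof (isP_ge2 _ Hp). induction n as [n IH] using lt_wf_ind. intros Hn.
  destruct (Nat.eq_dec (n mod p) 0) as [E|E].
  - apply Nat.mod_divide in E; [|lia]. destruct E as [k Hk].
    destruct (IH k) as [v [m [H1 H2]]]; try nia.
    exists (S v), m. split; auto. simpl. nia.
  - exists 0%nat, n. split; [simpl; lia|]. intros D. apply Nat.mod_divide in D; lia.
Qed.

Lemma val_unique p a b N M : is_prime p -> ~ Nat.divide p N -> ~ Nat.divide p M ->
  (p ^ a * N = p ^ b * M)%nat -> a = b /\ N = M.
Proof.
  intros Hp HN HM E. pose proof (isP_ge2 _ Hp).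
  assert (Hab : a = b).
  { destruct (lt_eq_lt_dec a b) as [[Hlt|Heq]|Hlt]; auto; exfalso.
    - assert (p ^ b = p ^ a * p ^ (b - a))%nat by (rewrite <- Nat.pow_add_r; f_equal; lia).
      rewrite H0 in E. assert (N = p ^ (b-a) * M)%nat.
      { apply (Nat.mul_cancel_l _ _ (p^a)). apply Nat.pow_nonzero; lia. rewrite E; ring. }
      apply HN. rewrite H1. destruct (b - a)%nat eqn:Hd; [lia|]. simpl. exists (p ^ n * M)%nat. ring.
    - assert (p ^ a = p ^ b * p ^ (a - b))%nat by (rewrite <- Nat.pow_add_r; f_equal; lia).
      rewrite H0 in E. assert (M = p ^ (a-b) * N)%nat.
      { apply (Nat.mul_cancel_l _ _ (p^b)). apply Nat.pow_nonzero; lia. rewrite <- E; ring. }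
      apply HM. rewrite H1. destruct (a - b)%nat eqn:Hd; [lia|]. simpl. exists (p ^ n * N)%nat. ring. }
  subst. split; auto. apply (Nat.mul_cancel_l _ _ (p^b)); auto. apply Nat.pow_nonzero; lia.
Qed.

Definition le_b (a : nat) (z : R) : bool := if Rle_dec (INR a) z then true else false.

Definition expsl (z : R) (K p : nat) : list nat := filter (fun v => le_b (p ^ v) z) (seq 0 (S K)).

Fixpoint model (z : R) (K : nat) (L : list nat) : list nat :=
  match L with
  | [] => [1%nat]
  | p :: L' => if prime_dec (Z.of_nat p) then
       flat_map (fun v => map (fun N => (p ^ v * N)%nat) (model z K L')) (expsl z K p)
     else model z K L'
  end.

Definition Hs (z : R) (K : nat) (h : nat -> R) (p : nat) : R :=
  rsum (seq 0 (S K)) (fun v => if Rle_dec (INR (p ^ v)) z then h (p ^ v)%nat else 0).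

Definition fprod (f : nat -> R) (L : list nat) : R := fold_right (fun p acc => f p * acc) 1 L.

Definition Prod z K h L := fprod (fun p => if prime_dec (Z.of_nat p) then Hs z K h p else 1) L.

Lemma model_prop z K L N : In N (model z K L) ->
  (1 <= N)%nat /\ (forall q, is_prime q -> Nat.divide q N -> In q L).
Proof.
  revert N. induction L as [|p L IH]; intros N H; simpl in H.
  - destruct H as [H|[]]. subst. split; auto. intros q Hq D. apply Nat.divide_1_r in D. apply isP_ge2 in Hq. lia.
  - destruct (prime_dec (Z.of_nat p)) as [Hp|Hp].
    + apply in_flat_map in H. destruct H as [v [_ H]]. apply in_map_iff in H. destruct H as [M [E HM]].
      subst. destruct (IH _ HM) as [H1 H2]. split.
      * pose proof (isP_ge2 _ Hp). assert (p ^ v <> 0)%nat by (apply Nat.pow_nonzero; lia).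
        nia.
      * intros q Hq D. destruct (pmult _ _ _ Hq D) as [D'|D'].
        -- left. symmetry. apply (pdiv_pow q p v); auto.
        -- right. auto.
    + destruct (IH _ H) as [H1 H2]. split; auto. intros q Hq D. right; auto.
Qed.

Lemma model_sum z K p L F : is_prime p ->
  rsum (model z K (p :: L)) F =
  rsum (seq 0 (S K)) (fun v => if Rle_dec (INR (p ^ v)) z then rsum (model z K L) (fun N => F (p ^ v * N)%nat) else 0).
Proof.
  intros Hp. simpl. destruct (prime_dec (Z.of_nat p)) as [_|C]; [|contradiction].
  rewrite rsum_flat_map. unfold expsl. rewrite rsum_filter. apply rsum_ext. intros v.
  unfold le_b. destruct (Rle_dec (INR (p ^ v)) z); [|reflexivity]. apply rsum_map'.
Qed.

Lemma model_coprime z K p L N v : is_prime p -> ~ In p L -> In N (model z K L) ->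
  Nat.gcd (p ^ v) N = 1%nat /\ (1 <= N)%nat /\ (1 <= p ^ v)%nat.
Proof.
  intros Hp Hn HN. destruct (model_prop _ _ _ _ HN) as [H1 H2]. split; [|split]; auto.
  - apply coprime_pow; auto.
  - pose proof (isP_ge2 _ Hp). assert (p ^ v <> 0)%nat by (apply Nat.pow_nonzero; lia). lia.
Qed.

Definition multR (h : nat -> R) : Prop :=
  h 1%nat = 1 /\ forall m n, (1 <= m)%nat -> (1 <= n)%nat -> Nat.gcd m n = 1%nat -> h (m * n)%nat = h m * h n.

Lemma model_prod z K h L : NoDup L -> multR h -> rsum (model z K L) h = Prod z K h L.
Proof.
  intros Hnd [H1 Hm]. induction L as [|p L IH].
  - unfold Prod, fprod; simpl. unfold rsum; simpl. rewrite H1. ring.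
  - inversion Hnd; subst. unfold Prod, fprod. cbn [fold_right]. fold (fprod (fun p => if prime_dec (Z.of_nat p) then Hs z K h p else 1) L).
    fold (Prod z K h L). rewrite <- IH by auto.
    destruct (prime_dec (Z.of_nat p)) as [Hp|Hp].
    + rewrite model_sum by auto. unfold Hs.
      rewrite Rmult_comm, <- rsum_scal. apply rsum_ext. intros v.
      destruct (Rle_dec (INR (p ^ v)) z); [|ring].
      rewrite Rmult_comm, <- rsum_scal. apply rsum_ext_in. intros N HN.
      destruct (model_coprime z K p L N v Hp H2 HN) as [G [A1 A2]]. rewrite Hm by auto. ring.
    + simpl. destruct (prime_dec (Z.of_nat p)); [contradiction|]. ring.
Qed.

Definition addR (t : nat -> R) : Prop :=
  forall m n, (1 <= m)%nat -> (1 <= n)%nat -> Nat.gcd m n = 1%nat -> t (m * n)%nat = t m + t n.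

Lemma addR_1 t : addR t -> t 1%nat = 0.
Proof. intros H. specialize (H 1%nat 1%nat (le_n _) (le_n _) eq_refl). simpl in H. lra. Qed.

Definition wpos (w : nat -> R) := forall n, (1 <= n)%nat -> 0 <= w n.

Lemma pow_ge1 p v : (1 <= p)%nat -> (1 <= p ^ v)%nat.
Proof. intros. assert (p ^ v <> 0)%nat by (apply Nat.pow_nonzero; lia). lia. Qed.

Lemma Hs_split z K h p : Hs z K h p = (if Rle_dec 1 z then h 1%nat else 0) +
  rsum (seq 1 K) (fun v => if Rle_dec (INR (p ^ v)) z then h (p ^ v)%nat else 0).
Proof. unfold Hs. simpl seq. rewrite rsum_cons. simpl pow. reflexivity. Qed.

Lemma Hs_nonneg z K h p : (1 <= p)%nat -> (forall n, (1 <= n)%nat -> 0 <= h n) -> 0 <= Hs z K h p.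
Proof. intros Hp Hh. unfold Hs. apply rsum_nonneg. intros v _. destruct Rle_dec; [|lra]. apply Hh, pow_ge1; auto. Qed.

Lemma Hs_ge1 z K w p : 1 <= z -> multR w -> wpos w -> (1 <= p)%nat -> 1 <= Hs z K w p.
Proof.
  intros Hz [H1 _] Hw Hp. rewrite Hs_split. destruct (Rle_dec 1 z); [|lra]. rewrite H1.
  assert (0 <= rsum (seq 1 K) (fun v => if Rle_dec (INR (p ^ v)) z then w (p ^ v)%nat else 0)).
  { apply rsum_nonneg. intros v _. destruct Rle_dec; [|lra]. apply Hw, pow_ge1; auto. }
  lra.
Qed.

Lemma fprod_ge1 f L : (forall p, In p L -> 1 <= f p) -> 1 <= fprod f L.
Proof. induction L; intros H; [unfold fprod; simpl; lra|]. assert (1 <= f a) by (apply H; left; auto).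
  assert (1 <= fprod f L) by (apply IHL; intros; apply H; right; auto).
  change (1 <= f a * fprod f L). nra. Qed.

Lemma Prod_ge1 z K w L : 1 <= z -> multR w -> wpos w -> 1 <= Prod z K w L.
Proof. intros. unfold Prod. apply fprod_ge1. intros p _. destruct prime_dec; [|lra].
  apply Hs_ge1; auto. apply isP_ge2 in p0. lia. Qed.

Definition Mm z K w t L := rsum L (fun p => if prime_dec (Z.of_nat p) then
   Hs z K (fun n => w n * t n) p / Hs z K w p else 0).
Definition Qm z K w t L := rsum L (fun p => if prime_dec (Z.of_nat p) then
   Hs z K (fun n => w n * (t n * t n)) p else 0).

Lemma variance z K w t L : NoDup L -> 1 <= z -> multR w -> wpos w -> addR t ->
  forall c, rsum (model z K L) (fun N => w N * ((t N - c) * (t N - c)))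
   <= Prod z K w L * (Qm z K w t L + (Mm z K w t L - c) * (Mm z K w t L - c)).
Proof.
  intros Hnd Hz Hwm Hw Ht. pose proof (addR_1 _ Ht) as Ht1. destruct Hwm as [Hw1 Hwm].
  induction L as [|p L IH]; intros c.
  - unfold Prod, Qm, Mm, fprod. simpl. unfold rsum; simpl. rewrite Hw1, Ht1. lra.
  - inversion Hnd as [|? ? Hpn Hnd']; subst.
    destruct (prime_dec (Z.of_nat p)) as [Hp|Hp].
    + rewrite model_sum by auto.
      set (P := Prod z K w L). set (Q := Qm z K w t L). set (M := Mm z K w t L).
      assert (HP : 1 <= P) by (apply Prod_ge1; auto; split; auto).
      assert (Hstep : rsum (seq 0 (S K)) (fun v => if Rle_dec (INR (p ^ v)) z then
          rsum (model z K L) (fun N => w (p ^ v * N)%nat * ((t (p ^ v * N)%nat - c) * (t (p ^ v * N)%nat - c))) else 0)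
        <= rsum (seq 0 (S K)) (fun v => if Rle_dec (INR (p ^ v)) z then
          w (p ^ v)%nat * (P * (Q + (M - c + t (p^v)%nat) * (M - c + t (p^v)%nat))) else 0)).
      { apply rsum_le. intros v. destruct Rle_dec; [|lra].
        assert (E : rsum (model z K L) (fun N => w (p ^ v * N)%nat * ((t (p ^ v * N)%nat - c) * (t (p ^ v * N)%nat - c)))
           = w (p ^ v)%nat * rsum (model z K L) (fun N => w N * ((t N - (c - t (p^v)%nat)) * (t N - (c - t (p^v)%nat))))).
        { rewrite <- rsum_scal. apply rsum_ext_in. intros N HN.
          destruct (model_coprime z K p L N v Hp Hpn HN) as [G [A1 A2]].
          rewrite Hwm, Ht by auto. ring. }
        rewrite E. apply Rmult_le_compat_l.
        - apply Hw, pow_ge1. apply isP_ge2 in Hp; lia.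
        - specialize (IH Hnd' (c - t (p ^ v)%nat)). fold P Q M in IH.
          replace (M - c + t (p ^ v)%nat) with (M - (c - t (p ^ v)%nat)) by ring. exact IH. }
      eapply Rle_trans; [exact Hstep|].
      set (Zp := Hs z K w p). set (T := Hs z K (fun n => w n * t n) p).
      set (R0 := Hs z K (fun n => w n * (t n * t n)) p).
      assert (HZ : 1 <= Zp) by (apply Hs_ge1; auto; [split; auto| apply isP_ge2 in Hp; lia]).
      assert (HR : 0 <= R0).
      { apply Hs_nonneg. apply isP_ge2 in Hp; lia. intros n Hn. specialize (Hw n Hn).
        assert (0 <= t n * t n) by apply Rle_0_sqr. nra. }
      assert (E2 : rsum (seq 0 (S K)) (fun v => if Rle_dec (INR (p ^ v)) z then
          w (p ^ v)%nat * (P * (Q + (M - c + t (p^v)%nat) * (M - c + t (p^v)%nat))) else 0)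
          = P * ((Q + (M - c) * (M - c)) * Zp + 2 * (M - c) * T + R0)).
      { unfold Zp, T, R0, Hs.
        rewrite <- !rsum_scal, <- rsum_plus, <- rsum_plus, <- rsum_scal.
        apply rsum_ext. intros v. destruct Rle_dec; ring. }
      rewrite E2.
      assert (EP : Prod z K w (p :: L) = Zp * P).
      { unfold Prod, fprod; simpl. destruct (prime_dec (Z.of_nat p)); [reflexivity|contradiction]. }
      assert (EQ : Qm z K w t (p :: L) = R0 + Q).
      { unfold Qm. rewrite rsum_cons. destruct (prime_dec (Z.of_nat p)); [reflexivity|contradiction]. }
      assert (EM : Mm z K w t (p :: L) = T / Zp + M).
      { unfold Mm. rewrite rsum_cons. destruct (prime_dec (Z.of_nat p)); [reflexivity|contradiction]. }
      rewrite EP, EQ, EM.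
      assert (Hx : (Q + (M - c) * (M - c)) * Zp + 2 * (M - c) * T + R0 <=
                   Zp * (R0 + Q + (T / Zp + M - c) * (T / Zp + M - c))).
      { assert (Zp * (R0 + Q + (T / Zp + M - c) * (T / Zp + M - c)) =
                (Q + (M - c) * (M - c)) * Zp + 2 * (M - c) * T + R0 + ((Zp - 1) * R0 + T * T / Zp)) by (field; lra).
        rewrite H. assert (0 <= (Zp - 1) * R0) by nra.
        assert (0 <= T * T / Zp) by (apply Rmult_le_pos; [apply Rle_0_sqr| left; apply Rinv_0_lt_compat; lra]). lra. }
      replace (Zp * P * (R0 + Q + (T / Zp + M - c) * (T / Zp + M - c))) with
         (P * (Zp * (R0 + Q + (T / Zp + M - c) * (T / Zp + M - c)))) by ring.
      apply Rmult_le_compat_l; lra.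
    + assert (E1 : model z K (p :: L) = model z K L) by (simpl; destruct prime_dec; [contradiction|reflexivity]).
      rewrite E1.
      assert (EP : Prod z K w (p :: L) = Prod z K w L).
      { unfold Prod, fprod; simpl. destruct (prime_dec (Z.of_nat p)); [contradiction|ring]. }
      assert (EQ : Qm z K w t (p :: L) = Qm z K w t L).
      { unfold Qm. rewrite rsum_cons. destruct (prime_dec (Z.of_nat p)); [contradiction|ring]. }
      assert (EM : Mm z K w t (p :: L) = Mm z K w t L).
      { unfold Mm. rewrite rsum_cons. destruct (prime_dec (Z.of_nat p)); [contradiction|ring]. }
      rewrite EP, EQ, EM. apply IH; auto.
Qed.

Lemma NoDup_flat_map' (l : list nat) (F : nat -> list nat) : NoDup l -> (forall a, In a l -> NoDup (F a)) ->
  (forall a b x, In a l -> In b l -> In x (F a) -> In x (F b) -> a = b) -> NoDup (flat_map F l).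
Proof.
  induction l as [|a l IH]; intros Hnd HF Hd; simpl; [constructor|].
  inversion Hnd; subst. apply NoDup_app.
  - apply HF; left; auto.
  - apply IH; auto. intros; apply HF; right; auto. intros; eapply Hd; eauto; right; auto.
  - intros x Hx Hx2. apply in_flat_map in Hx2. destruct Hx2 as [b [Hb Hxb]].
    assert (a = b) by (eapply Hd; eauto; [left|right]; auto). subst. contradiction.
Qed.

Lemma model_NoDup z K L : NoDup L -> NoDup (model z K L).
Proof.
  induction L as [|p L IH]; intros Hnd; simpl.
  - constructor; [simpl; auto|constructor].
  - inversion Hnd as [|? ? Hpn Hnd']; subst. destruct (prime_dec (Z.of_nat p)) as [Hp|Hp]; [|auto].
    pose proof (isP_ge2 _ Hp).
    assert (Hnp : forall N, In N (model z K L) -> ~ Nat.divide p N).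
    { intros N HN D. destruct (model_prop _ _ _ _ HN) as [_ H2]. apply Hpn, H2; auto. }
    apply NoDup_flat_map'.
    + apply NoDup_filter, seq_NoDup.
    + intros v _. apply NoDup_map_NoDup_ForallPairs; [|auto].
      intros a b _ _ E. apply (Nat.mul_cancel_l _ _ (p ^ v)); auto. apply Nat.pow_nonzero; lia.
    + intros a b x _ _ Ha Hb. apply in_map_iff in Ha, Hb. destruct Ha as [N [E1 HN]]. destruct Hb as [M [E2 HM]].
      subst. apply (val_unique p a b N M); auto.
Qed.

Lemma model_complete z K L n : (1 <= n)%nat -> INR n <= z -> (n <= K)%nat ->
  (forall q, is_prime q -> Nat.divide q n -> In q L) -> In n (model z K L).
Proof.
  revert n. induction L as [|p L IH]; intros n Hn Hz HK Hq; simpl.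
  - destruct (Nat.eq_dec n 1); [left; auto|]. destruct (prime_factor_exists n) as [q [H1 H2]]; [lia|].
    destruct (Hq q H1 H2).
  - destruct (prime_dec (Z.of_nat p)) as [Hp|Hp].
    + pose proof (isP_ge2 _ Hp).
      destruct (val_decomp p n Hp Hn) as [v [m [E Hm]]].
      assert (1 <= m)%nat. { destruct m; [lia|lia]. }
      assert (p ^ v <> 0)%nat by (apply Nat.pow_nonzero; lia).
      assert (Hpv : (p ^ v <= n)%nat) by nia.
      assert (Hmn : (m <= n)%nat) by nia.
      apply in_flat_map. exists v. split.
      * unfold expsl. apply filter_In. split.
        -- apply in_seq. pose proof (Nat.pow_gt_lin_r p v ltac:(lia)). lia.
        -- unfold le_b. destruct Rle_dec as [|C]; auto. exfalso; apply C.
           apply Rle_trans with (INR n); auto. apply le_INR; auto.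
      * apply in_map_iff. exists m. split; auto. apply IH; auto.
        -- apply Rle_trans with (INR n); auto. apply le_INR; auto.
        -- lia.
        -- intros q Hq1 Hq2. assert (Nat.divide q n) by (rewrite E; apply Nat.divide_mul_r; auto).
           destruct (Hq q Hq1 H2) as [E'|E']; auto. subst. contradiction.
    + apply IH; auto. intros q Hq1 Hq2. destruct (Hq q Hq1 Hq2) as [E'|E']; auto. subst. contradiction.
Qed.

Lemma ln_le' a b : 0 < a -> a <= b -> ln a <= ln b.
Proof. intros Ha Hab. destruct (Rle_lt_or_eq_dec _ _ Hab) as [H|H]; [left; apply ln_increasing; auto|subst; lra]. Qed.
Lemma exp_le' a b : a <= b -> exp a <= exp b.
Proof. intros Hab. destruct (Rle_lt_or_eq_dec _ _ Hab) as [H|H]; [left; apply exp_increasing; auto|subst; lra]. Qed.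
Lemma ln_nonneg a : 1 <= a -> 0 <= ln a.
Proof. intros. rewrite <- ln_1. apply ln_le'; lra. Qed.
Lemma INR_pos n : (1 <= n)%nat -> 0 < INR n.
Proof. intros. apply lt_0_INR. lia. Qed.
Lemma INR_ge1 n : (1 <= n)%nat -> 1 <= INR n.
Proof. intros. apply (le_INR 1). auto. Qed.

Lemma divS n p : (1 <= p)%nat -> ((S n) / p = n / p + (if Nat.eqb ((S n) mod p) 0 then 1 else 0))%nat.
Proof.
  intros Hp. pose proof (Nat.div_mod_eq n p) as E. pose proof (Nat.mod_upper_bound n p ltac:(lia)) as Hr.
  set (q := (n / p)%nat) in *. set (r := (n mod p)%nat) in *.
  destruct (Nat.eq_dec (S r) p) as [Hrp|Hrp].
  - assert (S n = p * (q + 1))%nat by lia.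
    assert (Hd : (S n / p = q + 1)%nat) by (symmetry; apply Nat.div_unique_exact; lia).
    assert (Hm : (S n mod p = 0)%nat) by (rewrite H; apply Nat.Div0.mod_mul_r || (rewrite Nat.mul_comm; apply Nat.Div0.mod_mul)).
    rewrite Hd, Hm. simpl. lia.
  - assert (S n = p * q + S r)%nat by lia.
    assert (Hd : (S n / p = q)%nat) by (symmetry; apply (Nat.div_unique _ _ _ (S r)); lia).
    assert (Hm : (S n mod p = S r)%nat) by (symmetry; apply (Nat.mod_unique _ _ q); lia).
    rewrite Hd, Hm. simpl. lia.
Qed.

Lemma mod0_div a b : (1 <= b)%nat -> (Nat.eqb (a mod b) 0 = true <-> Nat.divide b a).
Proof. intros Hb. rewrite Nat.eqb_eq. apply Nat.mod_divide. lia. Qed.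

Lemma pdiv_sum L m : NoDup L -> (1 <= m)%nat ->
  rsum L (fun p => if prime_dec (Z.of_nat p) then if Nat.eqb (m mod p) 0 then ln (INR p) else 0 else 0) <= ln (INR m).
Proof.
  revert m. induction L as [|p L IH]; intros m Hnd Hm.
  - rewrite rsum_nil. apply ln_nonneg, INR_ge1; auto.
  - inversion Hnd as [|? ? Hpn Hnd']; subst. rewrite rsum_cons.
    destruct (prime_dec (Z.of_nat p)) as [Hp|Hp]; [|rewrite Rplus_0_l; apply IH; auto].
    pose proof (isP_ge2 _ Hp).
    destruct (Nat.eqb (m mod p) 0) eqn:Em; [|rewrite Rplus_0_l; apply IH; auto].
    apply mod0_div in Em; [|lia]. destruct Em as [m' Hm']. subst m.
    assert (1 <= m')%nat by (destruct m'; lia).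
    rewrite (rsum_ext_in L _ (fun p0 => if prime_dec (Z.of_nat p0) then if Nat.eqb (m' mod p0) 0 then ln (INR p0) else 0 else 0)).
    + rewrite mult_INR, ln_mult by (apply INR_pos; lia). specialize (IH m' Hnd' H0). lra.
    + intros q Hq. destruct (prime_dec (Z.of_nat q)) as [Hq'|]; auto.
      pose proof (isP_ge2 _ Hq').
      destruct (Nat.eqb (m' * p mod q) 0) eqn:E1; destruct (Nat.eqb (m' mod q) 0) eqn:E2; auto; exfalso.
      * apply mod0_div in E1; [|lia]. rewrite <- Bool.not_true_iff_false in E2. apply E2. apply mod0_div; [lia|].
        rewrite Nat.mul_comm in E1. destruct (pmult _ _ _ Hq' E1) as [D|D]; auto.
        assert (q = p) by (apply pdiv_prime; auto). subst. contradiction.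
      * apply mod0_div in E2; [|lia]. rewrite <- Bool.not_true_iff_false in E1. apply E1. apply mod0_div; [lia|].
        apply Nat.divide_mul_l; auto.
Qed.

Definition Fch K n := rsum (seq 1 K) (fun p => if prime_dec (Z.of_nat p) then INR (n / p) * ln (INR p) else 0).
Definition lnfact n := rsum (seq 1 n) (fun m => ln (INR m)).

Lemma Fch_le K n : Fch K n <= lnfact n.
Proof.
  induction n.
  - unfold Fch, lnfact. simpl seq. rewrite rsum_nil. apply Rle_trans with (rsum (seq 1 K) (fun _ => 0)); [|rewrite rsum_zero; lra].
    apply rsum_le. intros p.
    destruct prime_dec; [|lra]. rewrite Nat.Div0.div_0_l. simpl. lra.
  - assert (E : Fch K (S n) = Fch K n + rsum (seq 1 K) (fun p => if prime_dec (Z.of_nat p) then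
        if Nat.eqb ((S n) mod p) 0 then ln (INR p) else 0 else 0)).
    { unfold Fch. rewrite <- rsum_plus. apply rsum_ext_in. intros p Hp. apply in_seq in Hp.
      destruct prime_dec; [|lra]. rewrite divS by lia. rewrite plus_INR.
      destruct Nat.eqb; simpl; ring. }
    rewrite E. unfold lnfact. rewrite seq_S, rsum_app. simpl (1 + n)%nat.
    assert (rsum (seq 1 K) (fun p => if prime_dec (Z.of_nat p) then if Nat.eqb (S n mod p) 0 then ln (INR p) else 0 else 0) <= ln (INR (S n))) by (apply pdiv_sum; [apply seq_NoDup|lia]).
    unfold lnfact in IHn. rewrite rsum_cons, rsum_nil. lra.
Qed.

Lemma lnfact_le n : lnfact n <= INR n * ln (INR n).
Proof.
  induction n.
  - unfold lnfact. simpl. rewrite rsum_nil. lra.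
  - unfold lnfact in *. rewrite seq_S, rsum_app. replace (1 + n)%nat with (S n) by lia. rewrite rsum_cons, rsum_nil.
    destruct n.
    + simpl. rewrite rsum_nil. rewrite ln_1. lra.
    + assert (ln (INR (S n)) <= ln (INR (S (S n)))) by (apply ln_le'; [apply INR_pos; lia| apply le_INR; lia]).
      assert (0 <= ln (INR (S n))) by (apply ln_nonneg, INR_ge1; lia).
      assert (ES : INR (S (S n)) = INR (S n) + 1) by apply S_INR. assert (0 < INR (S n)) by (apply INR_pos; lia).
      assert (0 <= INR (S n) * (ln (INR (S (S n))) - ln (INR (S n)))) by (apply Rmult_le_pos; lra).
      rewrite ES in *. nra.
Qed.

Lemma count_le a K n : (1 <= a)%nat -> rsum (seq a K) (fun p => if le_dec p n then 1 else 0) <= INR (n + 1 - a).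
Proof.
  revert a. induction K; intros a Ha.
  - simpl. rewrite rsum_nil. apply pos_INR.
  - simpl. rewrite rsum_cons. specialize (IHK (S a) ltac:(lia)). destruct le_dec.
    + replace (n + 1 - a)%nat with (S (n + 1 - S a)) by lia. rewrite S_INR. lra.
    + assert (INR (n + 1 - S a) <= INR (n + 1 - a)) by (apply le_INR; lia). lra.
Qed.

Definition Cn K n := rsum (seq 1 K) (fun p => if prime_dec (Z.of_nat p) then if le_dec p n then ln (INR p) / INR p else 0 else 0).

Lemma cheb_nat K n : (1 <= n)%nat -> Cn K n <= 2 * ln (INR n).
Proof.
  intros Hn. assert (Hnp : 0 < INR n) by (apply INR_pos; auto).
  assert (Hl : 0 <= ln (INR n)) by (apply ln_nonneg, INR_ge1; auto).
  assert (H1 : INR n * Cn K n <= Fch K n + rsum (seq 1 K) (fun p => if le_dec p n then ln (INR n) else 0)).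
  { unfold Cn, Fch. rewrite <- rsum_scal, <- rsum_plus. apply rsum_le_in. intros p Hp. apply in_seq in Hp.
    destruct prime_dec as [Hpr|]; destruct le_dec as [Hle|]; try lra.
    - pose proof (isP_ge2 _ Hpr). assert (0 < INR p) by (apply INR_pos; lia).
      assert (lnp : ln (INR p) <= ln (INR n)) by (apply ln_le'; auto; apply le_INR; auto).
      assert (lnp0 : 0 <= ln (INR p)) by (apply ln_nonneg, INR_ge1; lia).
      pose proof (Nat.div_mod_eq n p). pose proof (Nat.mod_upper_bound n p ltac:(lia)).
      assert (INR n <= INR p * (INR (n / p) + 1)).
      { rewrite <- S_INR, <- mult_INR. apply le_INR. nia. }
      assert (INR n * (ln (INR p) / INR p) <= (INR (n / p) + 1) * ln (INR p)).
      { unfold Rdiv. replace (INR n * (ln (INR p) * / INR p)) with ((INR n / INR p) * ln (INR p)) by (field; lra).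
        apply Rmult_le_compat_r; auto. apply Rmult_le_reg_r with (INR p); auto.
        unfold Rdiv. rewrite Rmult_assoc, Rinv_l by lra. lra. }
      nra.
    - assert (0 <= INR (n / p) * ln (INR p)).
      { apply Rmult_le_pos; [apply pos_INR|apply ln_nonneg, INR_ge1; lia]. } lra. }
  assert (H2 : rsum (seq 1 K) (fun p => if le_dec p n then ln (INR n) else 0) <= INR n * ln (INR n)).
  { rewrite (rsum_ext _ _ (fun p => ln (INR n) * (if le_dec p n then 1 else 0))) by (intros; destruct le_dec; ring).
    rewrite rsum_scal. pose proof (count_le 1 K n (le_n _)). replace (n + 1 - 1)%nat with n in H by lia. nra. }
  pose proof (Fch_le K n). pose proof (lnfact_le n).
  apply Rmult_le_reg_l with (INR n); auto. lra.
Qed.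

Definition Cr K z := rsum (seq 1 K) (fun p => if prime_dec (Z.of_nat p) then if Rle_dec (INR p) z then ln (INR p) / INR p else 0 else 0).

Lemma floor_nat z : 1 <= z -> exists n, (1 <= n)%nat /\ INR n <= z /\ forall p, INR p <= z -> (p <= n)%nat.
Proof.
  intros Hz. destruct (archimed z) as [H1 H2].
  assert (Hu : (1 < up z)%Z) by (apply lt_IZR; lra).
  exists (Z.to_nat (up z - 1)). split; [lia|split].
  - rewrite INR_IZR_INZ, Z2Nat.id by lia. rewrite minus_IZR. simpl. lra.
  - intros p Hp. rewrite INR_IZR_INZ in Hp. assert (Z.of_nat p < up z)%Z by (apply lt_IZR; lra). lia.
Qed.

Lemma cheb_real K z : 1 <= z -> Cr K z <= 2 * ln z.
Proof.
  intros Hz. destruct (floor_nat z Hz) as [n [Hn [Hnz Hp]]].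
  assert (E : Cr K z = Cn K n).
  { unfold Cr, Cn. apply rsum_ext. intros p. destruct prime_dec; auto.
    destruct Rle_dec as [H|H]; destruct le_dec as [H'|H']; auto.
    - exfalso; apply H'; auto.
    - exfalso; apply H. apply Rle_trans with (INR n); auto. apply le_INR; auto. }
  rewrite E. eapply Rle_trans; [apply cheb_nat; auto|].
  assert (ln (INR n) <= ln z) by (apply ln_le'; auto; apply INR_pos; auto). lra.
Qed.

Lemma bnd_gt x : 1 <= x -> x < INR (bnd x) /\ (2 <= bnd x)%nat.
Proof.
  intros Hx. unfold bnd. destruct (archimed x) as [H1 H2].
  assert (Hu : (1 < up x)%Z) by (apply lt_IZR; lra).
  rewrite INR_IZR_INZ, Z2Nat.id by lia. split; [lra|lia].
Qed.

Lemma le_bnd x n : 1 <= x -> INR n <= x -> (n < bnd x)%nat.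
Proof. intros Hx Hn. destruct (bnd_gt x Hx) as [H _]. apply INR_lt. lra. Qed.

Definition wl (lam : nat -> R) (n : nat) : R := lam n / INR n.

Lemma wl_mult lam : multiplicative_R lam -> multR (wl lam).
Proof.
  intros [H1 Hm]. split.
  - unfold wl. rewrite H1. simpl. field.
  - intros m n Hm1 Hn1 G. unfold wl. rewrite Hm by auto. rewrite mult_INR.
    assert (0 < INR m) by (apply INR_pos; auto). assert (0 < INR n) by (apply INR_pos; auto). field; lra.
Qed.

Lemma wl_pos lam : (forall n, 0 <= lam n) -> wpos (wl lam).
Proof. intros H n Hn. unfold wl. apply Rmult_le_pos; auto. left. apply Rinv_0_lt_compat, INR_pos; auto. Qed.

Lemma pp_ext nu0 x f g : (forall n, f n = g n) -> pp_sum_from nu0 x f = pp_sum_from nu0 x g.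
Proof. intros H. unfold pp_sum_from. apply rsum_ext. intros p. apply rsum_ext. intros nu.
  repeat destruct (_ : sumbool _ _); auto. Qed.

Lemma pp_plus nu0 x f g : pp_sum_from nu0 x (fun n => f n + g n) = pp_sum_from nu0 x f + pp_sum_from nu0 x g.
Proof. unfold pp_sum_from. rewrite <- rsum_plus. apply rsum_ext. intros p. rewrite <- rsum_plus. apply rsum_ext. intros nu.
  repeat destruct (_ : sumbool _ _); ring. Qed.

Lemma seq1_split K : (1 <= K)%nat -> seq 1 K = 1%nat :: seq 2 (K - 1).
Proof. intros. destruct K; [lia|]. simpl. f_equal. f_equal. lia. Qed.

Lemma pp1_eq x g : g 1%nat = 0 ->
  pp_sum_from 1 x g = rsum (seq 1 (bnd x)) (fun p => if prime_dec (Z.of_nat p) then Hs x (bnd x) g p else 0).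
Proof.
  intros Hg. unfold pp_sum_from. apply rsum_ext. intros p. destruct prime_dec.
  - rewrite Hs_split, Hg. destruct Rle_dec; rewrite Rplus_0_l; apply rsum_ext_in; intros nu Hnu;
    apply in_seq in Hnu; destruct le_dec; try lia; auto.
  - apply rsum_zero.
Qed.

Lemma ln_ge1 n : (3 <= n)%nat -> 1 <= ln (INR n).
Proof. intros. rewrite <- (ln_exp 1). apply ln_le'; [apply exp_pos|]. pose proof exp_le_3.
  assert (3 <= INR n) by (replace 3 with (INR 3) by (simpl; ring); apply le_INR; auto). lra. Qed.

Lemma pow_ge4 p v : (2 <= p)%nat -> (2 <= v)%nat -> (4 <= p ^ v)%nat.
Proof. intros. replace v with (2 + (v - 2))%nat by lia. rewrite Nat.pow_add_r.
  assert (1 <= p ^ (v-2))%nat by (apply pow_ge1; lia). simpl. nia. Qed.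

Lemma inM_b x A B lam z : 1 <= x -> z <= x -> (forall n, 0 <= lam n) -> in_M x A B lam ->
  rsum (seq 1 (bnd x)) (fun p => if prime_dec (Z.of_nat p) then
     rsum (seq 2 (bnd x - 1)) (fun v => if Rle_dec (INR (p ^ v)) z then wl lam (p ^ v)%nat * ln (INR (p ^ v)) else 0) else 0) <= B.
Proof.
  intros Hx Hzx Hl [_ HB]. eapply Rle_trans; [|exact HB]. unfold pp_sum_from. apply rsum_le. intros p.
  pose proof (bnd_gt x Hx) as [_ HK].
  destruct prime_dec as [Hp|Hp].
  - rewrite (seq1_split (bnd x)) by lia. rewrite rsum_cons. destruct (le_dec 2 1); [lia|]. rewrite Rplus_0_l.
    apply rsum_le_in. intros v Hv. apply in_seq in Hv. destruct le_dec; [|lia].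
    pose proof (isP_ge2 _ Hp). assert (4 <= p ^ v)%nat by (apply pow_ge4; lia).
    assert (0 <= ln (INR (p ^ v))) by (apply ln_nonneg, INR_ge1; lia).
    assert (0 < INR (p ^ v)) by (apply INR_pos; lia).
    destruct (Rle_dec (INR (p ^ v)) z); destruct (Rle_dec (INR (p ^ v)) x); try lra.
    + unfold wl. rewrite Rabs_right by (apply Rle_ge; auto). right; field; lra.
    + apply Rmult_le_pos; [apply Rmult_le_pos; auto; apply Rabs_pos|left; apply Rinv_0_lt_compat; auto].
  - rewrite rsum_zero. lra.
Qed.

Lemma inM_b0 x A B lam z : 1 <= x -> z <= x -> (forall n, 0 <= lam n) -> in_M x A B lam ->
  rsum (seq 1 (bnd x)) (fun p => if prime_dec (Z.of_nat p) then
     rsum (seq 2 (bnd x - 1)) (fun v => if Rle_dec (INR (p ^ v)) z then wl lam (p ^ v)%nat else 0) else 0) <= B.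
Proof.
  intros. eapply Rle_trans; [|eapply inM_b; eauto]. apply rsum_le_in. intros p Hp. apply in_seq in Hp.
  destruct prime_dec as [Hpr|]; [|lra]. apply rsum_le_in. intros v Hv. apply in_seq in Hv.
  pose proof (isP_ge2 _ Hpr). assert (4 <= p ^ v)%nat by (apply pow_ge4; lia).
  destruct Rle_dec; [|lra]. assert (1 <= ln (INR (p ^ v))) by (apply ln_ge1; lia).
  assert (0 <= wl lam (p ^ v)%nat) by (apply wl_pos; auto; lia). nra.
Qed.

Lemma inv_sq_sum m K : (1 <= m)%nat -> rsum (seq (S m) K) (fun n => / (INR n * INR n)) <= / INR m.
Proof.
  revert m. induction K; intros m Hm.
  - simpl. rewrite rsum_nil. left. apply Rinv_0_lt_compat, INR_pos; auto.
  - simpl. rewrite rsum_cons. specialize (IHK (S m) ltac:(lia)).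
    assert (Hm0 : 1 <= INR m) by (apply INR_ge1; auto). rewrite S_INR in *.
    assert (/ ((INR m + 1) * (INR m + 1)) + / (INR m + 1) <= / INR m).
    { apply Rmult_le_reg_l with (INR m * ((INR m + 1) * (INR m + 1))). nra.
      field_simplify; [|lra|lra]. nra. }
    lra.
Qed.

Lemma sq_sum_le (l : list nat) f : (forall a, In a l -> 0 <= f a) -> rsum l (fun a => f a * f a) <= rsum l f * rsum l f.
Proof.
  induction l; intros H. - rewrite !rsum_nil; lra.
  - rewrite !rsum_cons. assert (0 <= f a) by (apply H; left; auto).
    assert (0 <= rsum l f) by (apply rsum_nonneg; intros; apply H; right; auto).
    assert (rsum l (fun a => f a * f a) <= rsum l f * rsum l f) by (apply IHl; intros; apply H; right; auto). nra.
Qed.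

Definition bp lam z K p := rsum (seq 2 (K - 1)) (fun v => if Rle_dec (INR (p ^ v)) z then wl lam (p ^ v)%nat else 0).
Definition ap lam z p := if Rle_dec (INR p) z then wl lam p else 0.

Lemma Hs_abp lam z K p : multiplicative_R lam -> 1 <= z -> (1 <= K)%nat ->
  Hs z K (wl lam) p = 1 + ap lam z p + bp lam z K p.
Proof.
  intros Hm Hz HK. rewrite Hs_split. rewrite (seq1_split K HK), rsum_cons. destruct (wl_mult _ Hm) as [H1 _].
  destruct Rle_dec; [|lra]. rewrite H1. unfold ap, bp. rewrite Nat.pow_1_r. ring.
Qed.

Lemma ap_bound x A B lam z p : 0 < A -> z <= x -> (forall n, 0 <= lam n) -> in_M x A B lam -> is_prime p ->
  0 <= ap lam z p <= A / INR p.
Proof.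
  intros HA0 Hzx Hl [HA _] Hp. pose proof (isP_ge2 _ Hp). assert (0 < INR p) by (apply INR_pos; lia).
  unfold ap, wl.
  destruct Rle_dec; split.
  - apply Rmult_le_pos; auto. left; apply Rinv_0_lt_compat; auto.
  - unfold Rdiv. apply Rmult_le_compat_r; [left; apply Rinv_0_lt_compat; auto|].
    specialize (HA p Hp ltac:(lra)). rewrite Rabs_right in HA by (apply Rle_ge; auto). auto.
  - lra.
  - apply Rmult_le_pos; [lra|]. left; apply Rinv_0_lt_compat; auto.
Qed.

Lemma bp_nonneg lam z K p : (forall n, 0 <= lam n) -> (1 <= p)%nat -> 0 <= bp lam z K p.
Proof. intros Hl Hp. unfold bp. apply rsum_nonneg. intros v _. destruct Rle_dec; [|lra]. apply wl_pos; auto. apply pow_ge1; auto. Qed.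

Lemma C1_bound x A B lam : 0 < A -> 0 < B -> 1 <= x -> multiplicative_R lam -> (forall n, 0 <= lam n) -> in_M x A B lam ->
  rsum (seq 1 (bnd x)) (fun p => if prime_dec (Z.of_nat p) then (Hs x (bnd x) (wl lam) p - 1) * (Hs x (bnd x) (wl lam) p - 1) else 0)
  <= 2 * (A * A) + 2 * (B * B).
Proof.
  intros HA HB Hx Hm Hl HM. pose proof (bnd_gt x Hx) as [_ HK]. set (K := bnd x) in *.
  set (bf := fun p => if prime_dec (Z.of_nat p) then bp lam x K p else 0).
  assert (H1 : rsum (seq 1 K) (fun p => if prime_dec (Z.of_nat p) then (Hs x K (wl lam) p - 1) * (Hs x K (wl lam) p - 1) else 0)
     <= rsum (seq 1 K) (fun p => 2 * (A * A) * (if le_dec 2 p then / (INR p * INR p) else 0) + 2 * (bf p * bf p))).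
  { apply rsum_le_in. intros p Hp. apply in_seq in Hp. unfold bf. destruct prime_dec as [Hpr|Hpr].
    - pose proof (isP_ge2 _ Hpr). destruct le_dec; [|lia].
      rewrite Hs_abp by (auto; lia). pose proof (ap_bound x A B lam x p HA (Rle_refl _) Hl HM Hpr) as [Ha1 Ha2].
      assert (0 < INR p) by (apply INR_pos; lia).
      assert (ap lam x p * ap lam x p <= A * A * / (INR p * INR p)).
      { replace (A * A * / (INR p * INR p)) with ((A / INR p) * (A / INR p)) by (field; lra).
        apply Rmult_le_compat; auto. }
      set (a := ap lam x p) in *. set (b := bp lam x K p).
      assert (0 <= (a - b) * (a - b)) by apply Rle_0_sqr.
      replace (1 + a + b - 1) with (a + b) by ring. nra.
    - destruct le_dec. + assert (0 < INR p) by (apply INR_pos; lia).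
        assert (0 <= / (INR p * INR p)) by (left; apply Rinv_0_lt_compat; nra).
        assert (0 <= 0 * 0) by lra. nra.
      + lra. }
  eapply Rle_trans; [exact H1|]. rewrite rsum_plus, !rsum_scal.
  assert (H2 : rsum (seq 1 K) (fun p => if le_dec 2 p then / (INR p * INR p) else 0) <= 1).
  { rewrite (seq1_split K) by lia. rewrite rsum_cons. destruct le_dec; [lia|].
    rewrite (rsum_ext_in _ _ (fun n => / (INR n * INR n))).
    - pose proof (inv_sq_sum 1 (K - 1) (le_n _)). simpl in H. rewrite Rinv_1 in H. lra.
    - intros q Hq. apply in_seq in Hq. destruct le_dec; [auto|lia]. }
  assert (H3 : rsum (seq 1 K) (fun p => bf p * bf p) <= rsum (seq 1 K) bf * rsum (seq 1 K) bf).
  { apply sq_sum_le. intros p Hp. apply in_seq in Hp. unfold bf. destruct prime_dec; [|lra]. apply bp_nonneg; auto; lia. }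
  assert (H4 : rsum (seq 1 K) bf <= B) by (unfold bf, bp; apply (inM_b0 x A B lam x); auto; lra).
  assert (H5 : 0 <= rsum (seq 1 K) bf) by (apply rsum_nonneg; intros p Hp; apply in_seq in Hp; unfold bf; destruct prime_dec; [apply bp_nonneg; auto; lia|lra]).
  assert (rsum (seq 1 K) bf * rsum (seq 1 K) bf <= B * B) by (apply Rmult_le_compat; auto).
  assert (0 <= A * A) by nra. nra.
Qed.

Lemma Hs_ext z K f g p : (forall n, f n = g n) -> Hs z K f p = Hs z K g p.
Proof. intros H. unfold Hs. apply rsum_ext. intros v. destruct Rle_dec; auto. Qed.

Lemma Hs_cs z K w t p : (1 <= p)%nat -> wpos w ->
  Hs z K (fun n => w n * t n) p * Hs z K (fun n => w n * t n) p <= Hs z K w p * Hs z K (fun n => w n * (t n * t n)) p.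
Proof.
  intros Hp Hw. set (r := fun v => if Rle_dec (INR (p ^ v)) z then w (p ^ v)%nat else 0).
  pose proof (cs_w (seq 0 (S K)) r (fun _ => 1) (fun v => t (p ^ v)%nat)) as H.
  assert (Hr : forall i, 0 <= r i) by (intros i; unfold r; destruct Rle_dec; [apply Hw, pow_ge1; auto|lra]).
  specialize (H Hr).
  assert (E1 : rsum (seq 0 (S K)) (fun i => r i * 1 * t (p ^ i)%nat) = Hs z K (fun n => w n * t n) p)
    by (unfold Hs, r; apply rsum_ext; intros; destruct Rle_dec; ring).
  assert (E2 : rsum (seq 0 (S K)) (fun i => r i * 1 * 1) = Hs z K w p)
    by (unfold Hs, r; apply rsum_ext; intros; destruct Rle_dec; ring).
  assert (E3 : rsum (seq 0 (S K)) (fun i => r i * t (p ^ i)%nat * t (p ^ i)%nat) = Hs z K (fun n => w n * (t n * t n)) p)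
    by (unfold Hs, r; apply rsum_ext; intros; destruct Rle_dec; ring).
  cbv beta in H. rewrite E1, E2, E3 in H. exact H.
Qed.

Lemma real_part A B x lam t : 0 < A -> 0 < B -> 1 <= x -> multiplicative_R lam -> (forall n, 0 <= lam n) ->
  in_M x A B lam -> addR t ->
  sum_upto x (fun n => wl lam n * ((t n - pp_sum_from 1 x (fun q => lam q * t q / INR q)) *
                                 (t n - pp_sum_from 1 x (fun q => lam q * t q / INR q))))
  <= Prod x (bnd x) (wl lam) (seq 1 (bnd x)) * ((1 + (2 * (A * A) + 2 * (B * B))) * pp_sum_from 1 x (fun q => lam q * (t q * t q) / INR q)).
Proof.
  intros HA HB Hx Hm Hl HM Ht. pose proof (bnd_gt x Hx) as [HxK HK]. set (K := bnd x) in *.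
  set (L := seq 1 K). set (w := wl lam).
  set (c := pp_sum_from 1 x (fun q => lam q * t q / INR q)).
  set (S := pp_sum_from 1 x (fun q => lam q * (t q * t q) / INR q)).
  set (C1 := 2 * (A * A) + 2 * (B * B)).
  pose proof (addR_1 _ Ht) as Ht1. pose proof (wl_mult _ Hm) as Hwm. pose proof (wl_pos _ Hl) as Hwp.
  fold w in Hwm, Hwp.
  set (F := fun n => w n * ((t n - c) * (t n - c))).
  assert (HF : forall n, (1 <= n)%nat -> 0 <= F n).
  { intros n Hn. unfold F. apply Rmult_le_pos; [apply Hwp; auto|apply Rle_0_sqr]. }
  assert (S1 : sum_upto x F <= rsum (model x K L) F).
  { unfold sum_upto. fold K. fold L.
    apply Rle_trans with (rsum (model x K L) (fun n => if Rle_dec (INR n) x then F n else 0)).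
    - apply rsum_sub_le.
      + apply seq_NoDup.
      + intros a Ha. apply in_seq in Ha. destruct Rle_dec; [apply HF; lia|lra].
      + intros a Ha. destruct (model_prop _ _ _ _ Ha) as [Ha1 _]. destruct Rle_dec; [apply HF; lia|lra].
      + intros a Ha Hpos. apply in_seq in Ha. destruct Rle_dec as [Hax|]; [|lra].
        apply model_complete; [lia|auto|lia|].
        intros q Hq Hd. unfold L. apply in_seq. pose proof (isP_ge2 _ Hq).
        pose proof (Nat.divide_pos_le q a ltac:(lia) Hd). lia.
    - apply rsum_le_in. intros a Ha. destruct (model_prop _ _ _ _ Ha) as [Ha1 _]. destruct Rle_dec; [lra|apply HF; lia]. }
  assert (S2 := variance x K w t L (seq_NoDup _ _) Hx Hwm Hwp Ht c).
  set (P := Prod x K w L) in *. set (Q := Qm x K w t L) in *. set (M := Mm x K w t L) in *.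
  assert (HP : 1 <= P) by (apply Prod_ge1; auto).
  assert (EQ : Q = S).
  { unfold S. rewrite (pp_ext 1 x _ (fun q => w q * (t q * t q))) by (intros; unfold w, wl, Rdiv; ring).
    rewrite pp1_eq by (rewrite Ht1; ring). reflexivity. }
  assert (Ec : c = rsum L (fun p => if prime_dec (Z.of_nat p) then Hs x K (fun n => w n * t n) p else 0)).
  { unfold c. rewrite (pp_ext 1 x _ (fun q => w q * t q)) by (intros; unfold w, wl, Rdiv; ring).
    rewrite pp1_eq by (rewrite Ht1; ring). reflexivity. }
  assert (HZ : forall p, is_prime p -> 1 <= Hs x K w p) by (intros p Hp; apply Hs_ge1; auto; apply isP_ge2 in Hp; lia).
  set (f := fun p => if prime_dec (Z.of_nat p) then 1 - Hs x K w p else 0).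
  set (g := fun p => if prime_dec (Z.of_nat p) then Hs x K (fun n => w n * t n) p / Hs x K w p else 0).
  assert (EMc : M - c = rsum L (fun i => 1 * f i * g i)).
  { unfold M, Mm. rewrite Ec, <- rsum_minus. apply rsum_ext. intros p. unfold f, g. destruct prime_dec as [Hp|]; [|ring].
    specialize (HZ p Hp). field. lra. }
  pose proof (cs_w L (fun _ => 1) f g ltac:(intros; lra)) as Hcs.
  assert (Hf : rsum L (fun i => 1 * f i * f i) <= C1).
  { unfold C1. eapply Rle_trans; [|apply (C1_bound x A B lam); auto]. right. apply rsum_ext. intros p.
    unfold f, K, w. destruct prime_dec; ring. }
  assert (Hg : rsum L (fun i => 1 * g i * g i) <= Q).
  { unfold Q, Qm. apply rsum_le_in. intros p Hp. apply in_seq in Hp. unfold g. destruct prime_dec as [Hpr|]; [|lra].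
    specialize (HZ p Hpr). pose proof (Hs_cs x K w t p ltac:(lia) Hwp) as Hc.
    set (T := Hs x K (fun n => w n * t n) p) in *. set (Z0 := Hs x K w p) in *.
    set (R0 := Hs x K (fun n => w n * (t n * t n)) p) in *.
    assert (HR : 0 <= R0) by (apply Hs_nonneg; [lia|]; intros n Hn; apply Rmult_le_pos; [apply Hwp; auto|apply Rle_0_sqr]).
    replace (1 * (T / Z0) * (T / Z0)) with ((T * T) / (Z0 * Z0)) by (field; lra).
    apply Rmult_le_reg_r with (Z0 * Z0); [nra|]. unfold Rdiv. rewrite Rmult_assoc, Rinv_l by nra. nra. }
  assert (HQ0 : 0 <= Q).
  { unfold Q, Qm. apply rsum_nonneg. intros p Hp. apply in_seq in Hp. destruct prime_dec; [|lra].
    apply Hs_nonneg; [lia|]. intros n Hn. apply Rmult_le_pos; [apply Hwp; auto|apply Rle_0_sqr]. }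
  assert (Hg0 : 0 <= rsum L (fun i => 1 * g i * g i)) by (apply rsum_nonneg; intros; rewrite Rmult_1_l; apply Rle_0_sqr).
  assert (Hf0 : 0 <= rsum L (fun i => 1 * f i * f i)) by (apply rsum_nonneg; intros; rewrite Rmult_1_l; apply Rle_0_sqr).
  assert (HMc : (M - c) * (M - c) <= C1 * S).
  { rewrite EMc, <- EQ. eapply Rle_trans; [exact Hcs|]. apply Rmult_le_compat; auto. }
  eapply Rle_trans; [exact S1|]. eapply Rle_trans; [exact S2|].
  apply Rmult_le_compat_l; [lra|]. rewrite EQ in *. lra.
Qed.

Lemma fprod_nonneg f L : (forall p, In p L -> 0 <= f p) -> 0 <= fprod f L.
Proof. induction L as [|q L IH]; intros H; [unfold fprod; simpl; lra|].
  change (0 <= f q * fprod f L). apply Rmult_le_pos; [apply H; left; auto|apply IH; intros; apply H; right; auto]. Qed.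

Lemma fprod_exp (L : list nat) (a b c : nat -> R) :
  (forall p, In p L -> 0 <= a p <= b p * exp (c p)) -> (forall p, In p L -> 0 <= b p) ->
  fprod a L <= fprod b L * exp (rsum L c).
Proof.
  induction L as [|p L IH]; intros H1 H2.
  - unfold fprod; simpl. rewrite rsum_nil, exp_0. lra.
  - change (a p * fprod a L <= b p * fprod b L * exp (c p + rsum L c)). rewrite exp_plus.
    destruct (H1 p (or_introl eq_refl)) as [Ha1 Ha2]. assert (Hb := H2 p (or_introl eq_refl)).
    assert (IH' : fprod a L <= fprod b L * exp (rsum L c)) by (apply IH; intros; [apply H1|apply H2]; right; auto).
    assert (Hfa : 0 <= fprod a L).
    { apply fprod_nonneg. intros q Hq. apply (H1 q). right; auto. }
    replace (b p * fprod b L * (exp (c p) * exp (rsum L c))) with ((b p * exp (c p)) * (fprod b L * exp (rsum L c))) by ring.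
    apply Rmult_le_compat; auto.
Qed.

Definition diffp y x p := if Rle_dec (INR p) x then if Rle_dec (INR p) y then 0 else / INR p else 0.

Lemma Prod_ratio x y lam A B : 0 < A -> 0 < B -> 1 <= y -> y <= x -> multiplicative_R lam -> (forall n, 0 <= lam n) -> in_M x A B lam ->
  Prod x (bnd x) (wl lam) (seq 1 (bnd x)) <= Prod y (bnd x) (wl lam) (seq 1 (bnd x)) *
     exp (A * rsum (seq 1 (bnd x)) (fun p => if prime_dec (Z.of_nat p) then diffp y x p else 0) + B).
Proof.
  intros HA HB Hy Hyx Hm Hl HM. assert (Hx : 1 <= x) by lra. pose proof (bnd_gt x Hx) as [_ HK]. set (K := bnd x) in *.
  set (cc := fun p => if prime_dec (Z.of_nat p) then Hs x K (wl lam) p - Hs y K (wl lam) p else 0).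
  apply Rle_trans with (Prod y K (wl lam) (seq 1 K) * exp (rsum (seq 1 K) cc)).
  - unfold Prod. apply fprod_exp.
    + intros p Hp. apply in_seq in Hp. unfold cc. destruct prime_dec as [Hpr|]; [|rewrite exp_0; lra].
      pose proof (isP_ge2 _ Hpr).
      assert (H1 : 1 <= Hs y K (wl lam) p) by (apply Hs_ge1; auto; [apply wl_mult; auto|apply wl_pos; auto|lia]).
      assert (H2 : Hs y K (wl lam) p <= Hs x K (wl lam) p).
      { unfold Hs. apply rsum_le. intros v. destruct (Rle_dec _ y); destruct (Rle_dec _ x); try lra.
        apply wl_pos; auto. apply pow_ge1; lia. }
      split; [lra|]. pose proof (exp_ineq1_le (Hs x K (wl lam) p - Hs y K (wl lam) p)). nra.
    + intros p _. destruct prime_dec; [|lra]. apply Hs_nonneg. apply isP_ge2 in p0; lia. apply wl_pos; auto.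
  - apply Rmult_le_compat_l.
    + unfold Prod. left. apply Rlt_le_trans with 1; [lra|]. apply fprod_ge1. intros p _. destruct prime_dec; [|lra].
      apply Hs_ge1; auto; [apply wl_mult|apply wl_pos|apply isP_ge2 in p0; lia]; auto.
    + apply exp_le'. 
      apply Rle_trans with (rsum (seq 1 K) (fun p => A * (if prime_dec (Z.of_nat p) then diffp y x p else 0) +
                                  (if prime_dec (Z.of_nat p) then bp lam x K p else 0))).
      * apply rsum_le_in. intros p Hp. apply in_seq in Hp. unfold cc. destruct prime_dec as [Hpr|]; [|lra].
        pose proof (isP_ge2 _ Hpr). rewrite !Hs_abp by (auto; lia).
        assert (bp lam y K p >= 0) by (apply Rle_ge, bp_nonneg; auto; lia).
        assert (ap lam x p - ap lam y p <= A * diffp y x p).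
        { unfold ap, diffp. pose proof (ap_bound x A B lam x p HA (Rle_refl _) Hl HM Hpr) as [_ Hb].
          unfold ap in Hb. assert (0 <= wl lam p) by (apply wl_pos; auto; lia).
          destruct (Rle_dec (INR p) x); destruct (Rle_dec (INR p) y); try lra.
          }
        lra.
      * rewrite rsum_plus, rsum_scal. assert (rsum (seq 1 K) (fun p => if prime_dec (Z.of_nat p) then bp lam x K p else 0) <= B)
          by (unfold bp; apply (inM_b0 x A B lam x); auto; lra). lra.
Qed.

Lemma diff_sum_gt1 K x y : 1 < y -> 1 <= x ->
  rsum (seq 1 K) (fun p => if prime_dec (Z.of_nat p) then diffp y x p else 0) <= Cr K x / ln y.
Proof.
  intros Hy Hx. assert (Hly : 0 < ln y) by (rewrite <- ln_1; apply ln_increasing; lra).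
  unfold Cr, Rdiv. rewrite Rmult_comm, <- rsum_scal. apply rsum_le_in. intros p Hp. apply in_seq in Hp.
  destruct prime_dec as [Hpr|]; [|lra]. unfold diffp. pose proof (isP_ge2 _ Hpr).
  assert (0 < INR p) by (apply INR_pos; lia).
  destruct Rle_dec; [|lra]. destruct Rle_dec.
  - assert (0 <= ln (INR p) / INR p) by (apply Rmult_le_pos; [apply ln_nonneg, INR_ge1; lia|left; apply Rinv_0_lt_compat; auto]).
    assert (0 <= / ln y) by (left; apply Rinv_0_lt_compat; auto). nra.
  - assert (ln y <= ln (INR p)) by (apply ln_le'; lra).
    replace (/ ln y * (ln (INR p) * / INR p)) with ((ln (INR p) / ln y) * / INR p) by (field; lra).
    apply Rle_trans with (1 * / INR p); [lra|]. apply Rmult_le_compat_r; [left; apply Rinv_0_lt_compat; auto|].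
    apply Rmult_le_reg_r with (ln y); auto. unfold Rdiv. rewrite Rmult_assoc, Rinv_l by lra. lra.
Qed.

Lemma diff_sum_1 K x : 1 <= x ->
  rsum (seq 1 K) (fun p => if prime_dec (Z.of_nat p) then diffp 1 x p else 0) <= 2 * Cr K x.
Proof.
  intros Hx. unfold Cr. rewrite <- rsum_scal. apply rsum_le_in. intros p Hp. apply in_seq in Hp.
  destruct prime_dec as [Hpr|]; [|lra]. unfold diffp. pose proof (isP_ge2 _ Hpr).
  assert (0 < INR p) by (apply INR_pos; lia). assert (2 <= INR p) by (replace 2 with (INR 2) by (simpl; ring); apply le_INR; auto).
  destruct Rle_dec; [|lra]. destruct Rle_dec; [lra|].
  assert (ln 2 <= ln (INR p)) by (apply ln_le'; lra). pose proof ln_lt_2.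
  assert (1 <= 2 * ln (INR p)) by lra.
  replace (2 * (ln (INR p) / INR p)) with ((2 * ln (INR p)) * / INR p) by (field; lra).
  apply Rle_trans with (1 * / INR p); [lra|]. apply Rmult_le_compat_r; [left; apply Rinv_0_lt_compat; auto|lra].
Qed.

Lemma Prod_1 K lam : multiplicative_R lam -> (forall n, 0 <= lam n) -> (1 <= K)%nat -> Prod 1 K (wl lam) (seq 1 K) = 1.
Proof.
  intros Hm Hl HK. unfold Prod. generalize (seq 1 K). induction l; [reflexivity|].
  change ((if prime_dec (Z.of_nat a) then Hs 1 K (wl lam) a else 1) * fprod (fun p => if prime_dec (Z.of_nat p) then Hs 1 K (wl lam) p else 1) l = 1).
  rewrite IHl. destruct prime_dec as [Hp|]; [|ring]. pose proof (isP_ge2 _ Hp).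
  rewrite Hs_abp by (auto; lra). unfold ap, bp.
  assert (1 < INR a) by (apply (lt_INR 1); lia).
  destruct Rle_dec; [lra|]. rewrite rsum_ext_in with (g := fun _ => 0); [rewrite rsum_zero; ring|].
  intros v Hv. apply in_seq in Hv. destruct Rle_dec as [H'|]; auto. exfalso.
  assert (4 <= a ^ v)%nat by (apply pow_ge4; lia). assert (4 <= INR (a ^ v)) by (replace 4 with (INR 4) by (simpl; ring); apply le_INR; auto). lra.
Qed.

Lemma exp_bound u : 0 <= u <= 1 -> exp u <= 1 + 3 * u.
Proof.
  intros [H0 H1]. pose proof (exp_ineq1_le (- u)) as Hm.
  assert (exp u * exp (- u) = 1) by (rewrite <- exp_plus; replace (u + - u) with 0 by ring; apply exp_0).
  assert (exp u <= 3) by (pose proof exp_le_3; assert (exp u <= exp 1) by (apply exp_le'; lra); lra).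
  assert (0 < exp u) by apply exp_pos. nra.
Qed.

Lemma good_le x y lam : 1 <= x -> (forall n, 0 <= lam n) ->
  rsum (model y (bnd x) (seq 1 (bnd x))) (fun N => if Rle_dec (INR N) x then wl lam N else 0) <= sum_upto x (wl lam).
Proof.
  intros Hx Hl. unfold sum_upto. apply rsum_sub_le.
  - apply model_NoDup, seq_NoDup.
  - intros a Ha. destruct (model_prop _ _ _ _ Ha) as [Ha1 _]. destruct Rle_dec; [apply wl_pos; auto|lra].
  - intros a Ha. apply in_seq in Ha. destruct Rle_dec; [apply wl_pos; auto; lia|lra].
  - intros a Ha Hpos. destruct (model_prop _ _ _ _ Ha) as [Ha1 _]. destruct Rle_dec as [Hax|]; [|lra].
    apply in_seq. pose proof (le_bnd x a Hx Hax). lia.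
Qed.

Lemma D_sum x y lam A B : 0 < A -> 1 <= y -> y <= x -> multiplicative_R lam -> (forall n, 0 <= lam n) -> in_M x A B lam ->
  rsum (seq 1 (bnd x)) (fun p => if prime_dec (Z.of_nat p) then Hs y (bnd x) (fun n => wl lam n * ln (INR n)) p else 0)
  <= A * Cr (bnd x) y + B.
Proof.
  intros HA Hy Hyx Hm Hl HM. assert (Hx : 1 <= x) by lra. pose proof (bnd_gt x Hx) as [_ HK].
  eapply Rle_trans with (rsum (seq 1 (bnd x)) (fun p => A * (if prime_dec (Z.of_nat p) then if Rle_dec (INR p) y then ln (INR p) / INR p else 0 else 0)
     + (if prime_dec (Z.of_nat p) then rsum (seq 2 (bnd x - 1)) (fun v => if Rle_dec (INR (p ^ v)) y then wl lam (p ^ v)%nat * ln (INR (p ^ v)) else 0) else 0))).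
  - apply rsum_le_in. intros p Hp. apply in_seq in Hp. destruct prime_dec as [Hpr|]; [|lra].
    pose proof (isP_ge2 _ Hpr). rewrite Hs_split, (seq1_split (bnd x)) by lia. rewrite rsum_cons.
    change (INR 1) with 1. rewrite ln_1, Nat.pow_1_r. pose proof (ap_bound x A B lam y p HA Hyx Hl HM Hpr) as [Ha1 Ha2]. unfold ap in *.
    assert (0 <= ln (INR p)) by (apply ln_nonneg, INR_ge1; lia).
    assert (0 < INR p) by (apply INR_pos; lia).
    destruct (Rle_dec 1 y); [|lra]. destruct (Rle_dec (INR p) y).
    + assert (wl lam p * ln (INR p) <= A / INR p * ln (INR p)) by (apply Rmult_le_compat_r; auto).
      replace (A * (ln (INR p) / INR p)) with (A / INR p * ln (INR p)) by (field; lra). lra.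
    + lra.
  - rewrite rsum_plus, rsum_scal. unfold Cr.
    assert (rsum (seq 1 (bnd x)) (fun p => if prime_dec (Z.of_nat p) then rsum (seq 2 (bnd x - 1)) (fun v => if Rle_dec (INR (p ^ v)) y then wl lam (p ^ v)%nat * ln (INR (p ^ v)) else 0) else 0) <= B)
      by (apply (inM_b x A B lam y); auto). lra.
Qed.

Lemma rankin x y lam A B : 0 < A -> 0 < B -> 1 <= y -> 1 <= ln y -> y <= x -> multiplicative_R lam -> (forall n, 0 <= lam n) -> in_M x A B lam ->
  6 * A + 3 * B + 1 <= ln x / ln y ->
  Prod y (bnd x) (wl lam) (seq 1 (bnd x)) <= 2 * sum_upto x (wl lam).
Proof.
  intros HA HB Hy Hly Hyx Hm Hl HM HT.
  assert (Hx : 1 <= x) by lra. pose proof (bnd_gt x Hx) as [_ HK]. set (K := bnd x) in *. set (L := seq 1 K).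
  set (w := wl lam). set (s := / ln y).
  assert (Hs0 : 0 < s) by (apply Rinv_0_lt_compat; lra).
  assert (Hs1 : s <= 1) by (unfold s; rewrite <- Rinv_1; apply Rinv_le_contravar; lra).
  assert (Hsy : s * ln y = 1) by (unfold s; field; lra).
  set (E := fun n : nat => exp (s * ln (INR n))).
  set (h := fun n => w n * E n).
  assert (Hwm := wl_mult _ Hm). assert (Hwp := wl_pos _ Hl). fold w in Hwm, Hwp.
  assert (Hhm : multR h).
  { destruct Hwm as [H1 H2]. split.
    - unfold h, E. rewrite H1. simpl. rewrite ln_1, Rmult_0_r, exp_0. ring.
    - intros m n Hm1 Hn1 G. unfold h, E. rewrite H2 by auto. rewrite mult_INR, ln_mult by (apply INR_pos; auto).
      rewrite Rmult_plus_distr_l, exp_plus. ring. }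
  assert (Hhp : forall n, (1 <= n)%nat -> 0 <= h n) by (intros n Hn; unfold h; apply Rmult_le_pos; [apply Hwp; auto|left; apply exp_pos]).
  set (Pw := Prod y K w L). set (Ph := Prod y K h L).
  set (D := fun p => Hs y K (fun n => w n * ln (INR n)) p).
  assert (H1 : Ph <= Pw * exp (rsum L (fun p => if prime_dec (Z.of_nat p) then 3 * s * D p else 0))).
  { unfold Ph, Pw, Prod. apply fprod_exp.
    - intros p Hp. apply in_seq in Hp. destruct prime_dec as [Hpr|]; [|rewrite exp_0; lra].
      pose proof (isP_ge2 _ Hpr).
      assert (HD : 0 <= D p) by (apply Hs_nonneg; [lia|]; intros n Hn; apply Rmult_le_pos; [apply Hwp; auto|apply ln_nonneg, INR_ge1; auto]).
      assert (HW : 1 <= Hs y K w p) by (apply Hs_ge1; auto; lia).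
      split; [apply Hs_nonneg; auto; lia|].
      apply Rle_trans with (Hs y K w p + 3 * s * D p).
      + unfold D, Hs. rewrite <- rsum_scal, <- rsum_plus. apply rsum_le. intros v.
        destruct Rle_dec as [Hq|]; [|lra]. unfold h, E.
        assert (Hq1 : (1 <= p ^ v)%nat) by (apply pow_ge1; lia).
        assert (0 <= ln (INR (p ^ v))) by (apply ln_nonneg, INR_ge1; auto).
        assert (ln (INR (p ^ v)) <= ln y) by (apply ln_le'; [apply INR_pos|]; auto).
        assert (Hu : 0 <= s * ln (INR (p ^ v)) <= 1) by (split; [apply Rmult_le_pos; lra|nra]).
        pose proof (exp_bound _ Hu). pose proof (Hwp _ Hq1). nra.
      + assert (0 <= 3 * s * D p) by (apply Rmult_le_pos; lra). pose proof (exp_ineq1_le (3 * s * D p)). nra.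
    - intros p _. destruct prime_dec; [|lra]. apply Hs_nonneg; auto. apply isP_ge2 in p0; lia. }
  assert (H2 : rsum L (fun p => if prime_dec (Z.of_nat p) then 3 * s * D p else 0) <= 6 * A + 3 * B).
  { rewrite (rsum_ext _ _ (fun p => 3 * s * (if prime_dec (Z.of_nat p) then D p else 0))) by (intros; destruct prime_dec; ring).
    rewrite rsum_scal. pose proof (D_sum x y lam A B HA Hy Hyx Hm Hl HM) as HDs. change (rsum L (fun p => if prime_dec (Z.of_nat p) then D p else 0) <= A * Cr K y + B) in HDs.
    pose proof (cheb_real K y Hy).
    assert (HD0 : 0 <= rsum L (fun p => if prime_dec (Z.of_nat p) then D p else 0)).
    { apply rsum_nonneg. intros p Hp. apply in_seq in Hp. destruct prime_dec; [|lra]. apply Hs_nonneg; [lia|].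
      intros n Hn; apply Rmult_le_pos; [apply Hwp; auto|apply ln_nonneg, INR_ge1; auto]. }
    assert (A * Cr K y <= A * (2 * ln y)) by (apply Rmult_le_compat_l; lra).
    assert (rsum L (fun p => if prime_dec (Z.of_nat p) then D p else 0) <= 2 * A * ln y + B) by lra.
    assert (3 * s * rsum L (fun p => if prime_dec (Z.of_nat p) then D p else 0) <= 3 * s * (2 * A * ln y + B)) by (apply Rmult_le_compat_l; lra).
    nra. }
  set (tail := rsum (model y K L) (fun N => if Rle_dec (INR N) x then 0 else w N)).
  set (good := rsum (model y K L) (fun N => if Rle_dec (INR N) x then w N else 0)).
  assert (Hlx : 0 < ln x) by (apply Rlt_le_trans with (ln y); [lra|apply ln_le'; lra]).
  assert (H4 : tail <= exp (- (s * ln x)) * Ph).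
  { unfold Ph. rewrite <- model_prod by (auto; apply seq_NoDup). rewrite <- rsum_scal. apply rsum_le_in.
    intros N HN. destruct (model_prop _ _ _ _ HN) as [HN1 _].
    destruct Rle_dec as [|Hnx]. - apply Rmult_le_pos; [left; apply exp_pos|auto].
    - unfold h, E. assert (ln x < ln (INR N)) by (apply ln_increasing; lra).
      assert (1 <= exp (- (s * ln x)) * exp (s * ln (INR N))).
      { rewrite <- exp_plus. rewrite <- exp_0. apply exp_le'. nra. }
      pose proof (Hwp N HN1). nra. }
  assert (H5 : Pw = good + tail).
  { unfold Pw, good, tail. rewrite <- model_prod by (auto; apply seq_NoDup). rewrite <- rsum_plus. apply rsum_ext. intros N.
    destruct Rle_dec; ring. }
  assert (H6 : good <= sum_upto x w) by (apply good_le; auto).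
  assert (Hsx : 6 * A + 3 * B + 1 <= s * ln x) by (replace (s * ln x) with (ln x / ln y) by (unfold s; field; lra); exact HT).
  assert (H7 : exp (- (s * ln x)) * Ph <= Pw / 2).
  { apply Rle_trans with (exp (- (s * ln x)) * (Pw * exp (6 * A + 3 * B))).
    - apply Rmult_le_compat_l; [left; apply exp_pos|]. eapply Rle_trans; [exact H1|].
      apply Rmult_le_compat_l; [unfold Pw; left; apply Rlt_le_trans with 1; [lra|apply Prod_ge1; auto]|]. apply exp_le'; auto.
    - replace (exp (- (s * ln x)) * (Pw * exp (6 * A + 3 * B))) with (Pw * exp (- (s * ln x) + (6 * A + 3 * B))) by (rewrite exp_plus; ring).
      assert (exp (- (s * ln x) + (6 * A + 3 * B)) <= exp (-1)) by (apply exp_le'; lra).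
      assert (exp (-1) <= / 2).
      { assert (exp 1 * exp (-1) = 1) by (rewrite <- exp_plus; replace (1 + -1) with 0 by ring; apply exp_0).
        pose proof (exp_ineq1_le 1). pose proof (exp_pos (-1)). nra. }
      assert (1 <= Pw) by (apply Prod_ge1; auto). unfold Rdiv. nra. }
  lra.
Qed.

Lemma L_ge1 x lam : 1 <= x -> multiplicative_R lam -> (forall n, 0 <= lam n) -> 1 <= sum_upto x (wl lam).
Proof.
  intros Hx Hm Hl. pose proof (bnd_gt x Hx) as [_ HK]. unfold sum_upto. rewrite (seq1_split (bnd x)) by lia. rewrite rsum_cons.
  destruct (wl_mult _ Hm) as [H1 _]. change (INR 1) with 1. destruct Rle_dec; [|lra]. rewrite H1.
  assert (0 <= rsum (seq 2 (bnd x - 1)) (fun n => if Rle_dec (INR n) x then wl lam n else 0)).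
  { apply rsum_nonneg. intros a Ha. apply in_seq in Ha. destruct Rle_dec; [apply wl_pos; auto; lia|lra]. }
  lra.
Qed.

Lemma P_bound A B x lam : 0 < A -> 0 < B -> 1 <= x -> multiplicative_R lam -> (forall n, 0 <= lam n) -> in_M x A B lam ->
  Prod x (bnd x) (wl lam) (seq 1 (bnd x)) <= 2 * exp (4 * A * (6 * A + 3 * B + 1) + B) * sum_upto x (wl lam).
Proof.
  intros HA HB Hx Hm Hl HM. set (T := 6 * A + 3 * B + 1). pose proof (bnd_gt x Hx) as [_ HK].
  assert (HT : 1 <= T) by (unfold T; lra).
  pose proof (L_ge1 x lam Hx Hm Hl) as HL.
  assert (Hlx : 0 <= ln x) by (apply ln_nonneg; auto).
  pose proof (cheb_real (bnd x) x Hx) as Hch.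
  destruct (Rle_lt_dec T (ln x)) as [Hbig|Hsmall].
  - set (y := exp (ln x / T)).
    assert (Hly : ln y = ln x / T) by (unfold y; apply ln_exp).
    assert (Hly1 : 1 <= ln y) by (rewrite Hly; apply Rmult_le_reg_r with T; [lra|]; unfold Rdiv; rewrite Rmult_assoc, Rinv_l by lra; lra).
    assert (Hy1 : 1 <= y) by (unfold y; rewrite <- exp_0; apply exp_le'; apply Rmult_le_pos; [lra|left; apply Rinv_0_lt_compat; lra]).
    assert (Hyx : y <= x).
    { rewrite <- (exp_ln x) by lra. unfold y. apply exp_le'. apply Rmult_le_reg_r with T; [lra|].
      unfold Rdiv; rewrite Rmult_assoc, Rinv_l by lra. nra. }
    assert (HxT : ln x / ln y = T) by (rewrite Hly; field; lra).
    pose proof (rankin x y lam A B HA HB Hy1 Hly1 Hyx Hm Hl HM ltac:(rewrite HxT; unfold T; lra)) as HR.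
    pose proof (Prod_ratio x y lam A B HA HB Hy1 Hyx Hm Hl HM) as HPR.
    assert (Hy2 : 1 < y).
    { unfold y. rewrite <- Hly in *. rewrite exp_ln by lra. rewrite <- (exp_ln y) by lra. 
      apply Rlt_le_trans with (exp 1); [pose proof (exp_ineq1_le 1); lra|]. apply exp_le'. lra. }
    pose proof (diff_sum_gt1 (bnd x) x y Hy2 Hx) as Hd.
    assert (Hd2 : Cr (bnd x) x / ln y <= 2 * T).
    { apply Rmult_le_reg_r with (ln y); [lra|]. unfold Rdiv. rewrite Rmult_assoc, Rinv_l by lra.
      rewrite Hly. replace (2 * T * (ln x / T)) with (2 * ln x) by (field; lra). lra. }
    assert (exp (A * rsum (seq 1 (bnd x)) (fun p => if prime_dec (Z.of_nat p) then diffp y x p else 0) + B)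
            <= exp (4 * A * T + B)).
    { apply exp_le'. assert (A * rsum (seq 1 (bnd x)) (fun p => if prime_dec (Z.of_nat p) then diffp y x p else 0) <= A * (2 * T))
        by (apply Rmult_le_compat_l; lra). nra. }
    assert (0 <= Prod y (bnd x) (wl lam) (seq 1 (bnd x))) by (left; apply Rlt_le_trans with 1; [lra|apply Prod_ge1; [lra|apply wl_mult|apply wl_pos]; auto]).
    eapply Rle_trans; [exact HPR|].
    apply Rle_trans with (2 * sum_upto x (wl lam) * exp (4 * A * T + B)).
    + apply Rmult_le_compat; auto. left; apply exp_pos.
    + lra.
  - pose proof (Prod_ratio x 1 lam A B HA HB (Rle_refl _) Hx Hm Hl HM) as HPR.
    rewrite Prod_1 in HPR by (auto; lia).
    pose proof (diff_sum_1 (bnd x) x Hx) as Hd.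
    assert (exp (A * rsum (seq 1 (bnd x)) (fun p => if prime_dec (Z.of_nat p) then diffp 1 x p else 0) + B)
            <= exp (4 * A * T + B)).
    { apply exp_le'. assert (A * rsum (seq 1 (bnd x)) (fun p => if prime_dec (Z.of_nat p) then diffp 1 x p else 0) <= A * (4 * T))
        by (apply Rmult_le_compat_l; lra). nra. }
    assert (0 < exp (4 * A * T + B)) by apply exp_pos. nra.
Qed.

Lemma pp_nonneg nu0 x g : (forall n, (1 <= n)%nat -> 0 <= g n) -> 0 <= pp_sum_from nu0 x g.
Proof.
  intros H. unfold pp_sum_from. apply rsum_nonneg. intros p Hp. apply in_seq in Hp. apply rsum_nonneg. intros nu _.
  repeat destruct (_ : sumbool _ _); try lra. apply H, pow_ge1; lia.
Qed.

Lemma sum_upto_plus x f g : sum_upto x (fun n => f n + g n) = sum_upto x f + sum_upto x g.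
Proof. unfold sum_upto. rewrite <- rsum_plus. apply rsum_ext. intros n. destruct Rle_dec; ring. Qed.

Lemma sum_upto_ext x f g : (forall n, f n = g n) -> sum_upto x f = sum_upto x g.
Proof. intros H. unfold sum_upto. apply rsum_ext. intros n. destruct Rle_dec; auto. Qed.

Theorem lemma5p1 :
  forall A B : R, 0 < A -> 0 < B ->
  exists K : R, 0 < K /\
  forall (x : R) (lam : nat -> R) (th : nat -> Cpx),
    1 <= x ->
    multiplicative_R lam ->
    (forall n, 0 <= lam n) ->
    in_M x A B lam ->
    additive_C th ->
    sum_upto x (fun n => lam n / INR n * Cnorm2 (Csub (th n) (Theta lam th x)))
    <= K * frakS lam th x * sum_upto x (fun n => lam n / INR n).
Proof.
  intros A B HA HB.
  set (C1 := 2 * (A * A) + 2 * (B * B)). set (C2 := 2 * exp (4 * A * (6 * A + 3 * B + 1) + B)).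
  exists ((1 + C1) * C2). split.
  { unfold C1, C2. assert (0 < exp (4 * A * (6 * A + 3 * B + 1) + B)) by apply exp_pos.
    assert (0 <= A * A) by nra. assert (0 <= B * B) by nra. nra. }
  intros x lam th Hx Hm Hl HM Hth.
  set (t1 := fun n => fst (th n)). set (t2 := fun n => snd (th n)).
  assert (Ht1 : addR t1) by (intros m n Hm1 Hn1 G; unfold t1; rewrite Hth by auto; reflexivity).
  assert (Ht2 : addR t2) by (intros m n Hm1 Hn1 G; unfold t2; rewrite Hth by auto; reflexivity).
  pose proof (real_part A B x lam t1 HA HB Hx Hm Hl HM Ht1) as R1.
  pose proof (real_part A B x lam t2 HA HB Hx Hm Hl HM Ht2) as R2.
  fold C1 in R1, R2.
  set (P := Prod x (bnd x) (wl lam) (seq 1 (bnd x))) in *.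
  set (S1 := pp_sum_from 1 x (fun q => lam q * (t1 q * t1 q) / INR q)) in *.
  set (S2 := pp_sum_from 1 x (fun q => lam q * (t2 q * t2 q) / INR q)) in *.
  assert (ES : frakS lam th x = S1 + S2).
  { unfold frakS, S1, S2. rewrite <- pp_plus. apply pp_ext. intros n. unfold Cnorm2, t1, t2, Rdiv. ring. }
  assert (EL : sum_upto x (fun n => lam n / INR n * Cnorm2 (Csub (th n) (Theta lam th x))) =
     sum_upto x (fun n => wl lam n * ((t1 n - pp_sum_from 1 x (fun q => lam q * t1 q / INR q)) * (t1 n - pp_sum_from 1 x (fun q => lam q * t1 q / INR q))))
   + sum_upto x (fun n => wl lam n * ((t2 n - pp_sum_from 1 x (fun q => lam q * t2 q / INR q)) * (t2 n - pp_sum_from 1 x (fun q => lam q * t2 q / INR q))))).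
  { rewrite <- sum_upto_plus. apply sum_upto_ext. intros n. unfold Cnorm2, Csub, Theta, wl, t1, t2. simpl. ring. }
  assert (HS1 : 0 <= S1) by (apply pp_nonneg; intros n Hn; apply Rmult_le_pos; [apply Rmult_le_pos; [auto|apply Rle_0_sqr]|left; apply Rinv_0_lt_compat, INR_pos; auto]).
  assert (HS2 : 0 <= S2) by (apply pp_nonneg; intros n Hn; apply Rmult_le_pos; [apply Rmult_le_pos; [auto|apply Rle_0_sqr]|left; apply Rinv_0_lt_compat, INR_pos; auto]).
  pose proof (P_bound A B x lam HA HB Hx Hm Hl HM) as HP. fold P C2 in HP.
  assert (HC1 : 0 <= C1) by (unfold C1; nra).
  rewrite EL, ES. change (fun n => lam n / INR n) with (wl lam).
  assert (P * ((1 + C1) * (S1 + S2)) <= C2 * sum_upto x (wl lam) * ((1 + C1) * (S1 + S2))).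
  { apply Rmult_le_compat_r; [|exact HP]. apply Rmult_le_pos; lra. }
  assert (P * ((1 + C1) * S1) + P * ((1 + C1) * S2) = P * ((1 + C1) * (S1 + S2))) by ring.
  assert (C2 * sum_upto x (wl lam) * ((1 + C1) * (S1 + S2)) = (1 + C1) * C2 * (S1 + S2) * sum_upto x (wl lam)) by ring.
  lra.
Qed.
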